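(* Let $G$ be a finitely generated free abelian group and $N$ a $\mathbb{Z}[G]$-module admitting two injective presentations $0\to\mathbb{Z}[G]^a\xrightarrow{P}\mathbb{Z}[G]^b\xrightarrow{\pi}N\to0$ and $0\to\mathbb{Z}[G]^{a'}\xrightarrow{P'}\mathbb{Z}[G]^{b'}\xrightarrow{\pi'}N\to0$ with $b-a=b'-a'=d$. For $u_1,\dots,u_d\in N$ set $\mathcal{A}_P(u_1\wedge\cdots\wedge u_d)=\det[P\,|\,\bar u_1\cdots\bar u_d]\in\mathbb{Z}[G]$ with $\pi(\bar u_j)=u_j$, and similarly $\mathcal{A}_{P'}$. Then $\mathcal{A}_P$ does not depend on the lifts $\bar u_j$, and there is a single element $\epsilon g\in\pm G\subset\mathbb{Z}[G]$ with $\mathcal{A}_{P'}=\epsilon g\cdot\mathcal{A}_P$ on all of $\wedge^d_{\mathbb{Z}[G]}N$. In particular, for a connected sutured cobordism $(Y,\Gamma)$ with $H_2(\overline Y,\overline R^+)=0$, the $\mathbb{Z}[G]$-valued Alexander function on $\wedge^d_{\mathbb{Z}[G]}H_1(\overline Y,\overline R^+)$, $d=-\chi(Y,R^+)$, depends up to global multiplication by $\pm G$ only on the module $H_1(\overline Y,\overline R^+)$ and $d$.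
   Context: For a connected sutured cobordism $(Y,\Gamma)$ (compact oriented 3-manifold whose boundary contains the incoming/outgoing surfaces and regions $R^+,R^-$), $G=H_1(Y)/\mathrm{tors}(H_1(Y))$, $p\colon\overline Y\to Y$ is the maximal free abelian cover (deck group $G$), $\overline R^+=p^{-1}(R^+)$, and $H_1(\overline Y,\overline R^+)$ is a $\mathbb{Z}[G]$-module; when $H_2(\overline Y,\overline R^+)=0$ it admits an injective presentation matrix of deficiency $d$ (coming from a relative CW structure with $a$ 2-cells and $b$ 1-cells, $b-a=d$), and the Alexander function $\mathcal{A}^{\mathbb{Z}[G]}_{Y,\Gamma}$ is $\mathcal{A}_P$ for such $P$ (and $0$ if $H_2(\overline Y,\overline R^+)\neq0$). An injective presentation of deficiency $d$ is an exact sequence as in the claim with $b-a=d$. *)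

(* Defs.v *)
From HB Require Import structures.
From mathcomp Require Import all_boot all_order all_algebra.
Set Implicit Arguments. Unset Strict Implicit. Unset Printing Implicit Defensive.
Import Order.TTheory GRing.Theory Num.Theory.
Local Open Scope ring_scope.

(* The finitely generated free abelian group G is modelled as Z^n = 'rV[int]_n
   (written additively).  [is_group_ring e] says that the commutative ring R,
   together with e : G -> R, is the integral group ring Z[G]: e is a group
   homomorphism from (G,+) to the multiplicative monoid of R, and the family
   (e g)_{g in G} is a Z-basis of R (spanning + Z-linearly independent). *)
Definition is_group_ring (R : comNzRingType) (n : nat) (e : 'rV[int]_n -> R) : Prop :=
  [/\ e 0 = 1,
      (forall x y, e (x + y) = e x * e y),
      (forall r : R, exists s : seq ('rV[int]_n * int),
          r = \sum_(p <- s) (p.2)%:~R * e p.1) &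
      (forall (s : seq 'rV[int]_n) (c : 'rV[int]_n -> int), uniq s ->
          \sum_(g <- s) (c g)%:~R * e g = 0 -> forall g, g \in s -> c g = 0)].

(* An injective presentation 0 -> R^a --P--> R^b --pi--> N -> 0, with the
   row-vector convention (R^a -> R^b is v |-> v *m P), and b = a + d. *)
Definition injective_presentation (R : comNzRingType) (N : lmodType R)
    (a d : nat) (P : 'M[R]_(a, a + d)) (pi : 'rV[R]_(a + d) -> N) : Prop :=
  [/\ linear pi,
      (forall v w : 'rV[R]_a, v *m P = w *m P -> v = w),
      (forall x : N, exists v, pi v = x) &
      (forall v, pi v = 0 <-> exists w, v = w *m P)].

Definition alex_det (R : comNzRingType) (a d : nat) (P : 'M[R]_(a, a + d))
    (ubar : 'I_d -> 'rV[R]_(a + d)) : R :=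
  \det (col_mx P (\matrix_(j < d) ubar j)).

(* Main.v *)
Require Import Defs.
From HB Require Import structures.
From mathcomp Require Import all_boot all_order all_algebra.
Set Implicit Arguments. Unset Strict Implicit. Unset Printing Implicit Defensive.
Import Order.TTheory GRing.Theory Num.Theory.
Local Open Scope ring_scope.

Section Mx.
Variable R : comNzRingType.

Lemma rows_choice m k n (A : 'M[R]_(m, n)) (Q : 'M[R]_(k, n)) :
  (forall i, exists w : 'rV_k, row i A = w *m Q) -> exists X, A = X *m Q.
Proof.
move=> H; have [f Hf] := fin_all_exists H.
exists (\matrix_i f i); apply/row_matrixP => i.
by rewrite row_mul rowK Hf.
Qed.

Lemma det_lift_rows k d (Q : 'M[R]_(k, k + d)) (X : 'M[R]_(d, k)) U :
  \det (col_mx Q (X *m Q + U)) = \det (col_mx Q U).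
Proof.
have -> : col_mx Q (X *m Q + U) = block_mx 1%:M 0 X 1%:M *m col_mx Q U.
  by rewrite mul_block_col !mul1mx mul0mx addr0.
by rewrite det_mulmx det_lblock !det1 !mul1r.
Qed.

Lemma det_change_basis k d (Q : 'M[R]_(k, k + d)) (M : 'M[R]_k) U :
  \det (col_mx (M *m Q) U) = \det M * \det (col_mx Q U).
Proof.
have -> : col_mx (M *m Q) U = block_mx M 0 0 1%:M *m col_mx Q U.
  by rewrite mul_block_col !mul0mx !mul1mx addr0 add0r.
by rewrite det_mulmx det_lblock det1 mulr1.
Qed.

Lemma gen (N : lmodType R) (k k' d : nat) (e : k = k')
  (Q : 'M[R]_(k, k+d)) (Phi : 'rV[R]_(k+d) -> N)
  (Q' : 'M[R]_(k', k'+d)) (Phi' : 'rV[R]_(k'+d) -> N)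
  (C : 'M[R]_(k+d, k'+d)) (C' : 'M[R]_(k'+d, k+d)) :
  C *m C' = 1%:M -> C' *m C = 1%:M ->
  (forall v, Phi' (v *m C) = Phi v) ->
  (forall v w, Phi' (v - w) = Phi' v - Phi' w) ->
  (forall v, Phi v = 0 <-> exists w, v = w *m Q) ->
  (forall v w : 'rV_k, v *m Q = w *m Q -> v = w) ->
  (forall v, Phi' v = 0 <-> exists w, v = w *m Q') ->
  exists c c', c * c' = 1 /\
    forall U U', (forall j, Phi (row j U) = Phi' (row j U')) ->
      \det (col_mx Q' U') = c * \det (col_mx Q U).
Proof.
case: k' / e in Q' Phi' C C' *.
move=> CC' C'C PhiC PhiB kerQ injQ kerQ'.
have Q'0 i : Phi' (row i Q') = 0 by apply/kerQ'; exists (delta_mx 0 i); rewrite rowE.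
have [M HM] : exists M, Q' = M *m (Q *m C).
  apply: rows_choice => i.
  have /kerQ [w Hw] : Phi (row i Q' *m C') = 0 by rewrite -PhiC -mulmxA C'C mulmx1.
  by exists w; rewrite mulmxA -Hw -mulmxA C'C mulmx1.
have [M' HM'] : exists M', Q *m C = M' *m Q'.
  apply: rows_choice => i.
  have /kerQ' [w Hw] : Phi' (row i (Q *m C)) = 0.
    by rewrite row_mul PhiC; apply/kerQ; exists (delta_mx 0 i); rewrite rowE.
  by exists w.
have MM : M' *m M = 1%:M.
  have E : (M' *m M) *m Q = Q.
    have H1 : Q = Q *m C *m C' by rewrite -mulmxA CC' mulmx1.
    by rewrite {2}H1 HM' HM !mulmxA -(mulmxA _ C C') CC' mulmx1.
  apply/row_matrixP => i; apply: injQ.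
  by rewrite -row_mul E row1 -rowE.
exists (\det M * \det C), (\det M' * \det C'); split.
  rewrite mulrACA -!det_mulmx CC' det1 mulr1.
  by rewrite (mulmx1C MM) det1.
move=> U U' HU.
have [X HX] : exists X, U' - U *m C = X *m Q'.
  apply: rows_choice => j; apply/kerQ'.
  by rewrite rowE mulmxBr -!rowE row_mul PhiB PhiC HU subrr.
have -> : U' = X *m Q' + U *m C by rewrite -HX subrK.
rewrite det_lift_rows HM det_change_basis -mulrA; congr (_ * _).
by rewrite -mul_col_mx det_mulmx mulrC.
Qed.

Lemma det_castmx m m' (e : m = m') (A : 'M[R]_m) : \det (castmx (e, e) A) = \det A.
Proof. by case: m' / e in A *; rewrite castmx_id. Qed.

Definition mkM p a d r (Y : 'M[R]_(r,p)) (X : 'M[R]_(r, a+d)) : 'M[R]_(r, (p+a)+d) :=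
  row_mx (row_mx Y (lsubmx X)) (rsubmx X).
Definition pyM p a d r (V : 'M[R]_(r, (p+a)+d)) : 'M[R]_(r,p) := lsubmx (lsubmx V).
Definition pxM p a d r (V : 'M[R]_(r, (p+a)+d)) : 'M[R]_(r,a+d) :=
  row_mx (rsubmx (lsubmx V)) (rsubmx V).

Section Layout.
Variables p a d : nat.

Lemma mkM_mul r s (A : 'M[R]_(s, r)) (Y : 'M[R]_(r,p)) (X : 'M[R]_(r, a+d)) :
  A *m mkM Y X = mkM (A *m Y) (A *m X).
Proof. by rewrite /mkM !mul_mx_row mulmx_lsub mulmx_rsub. Qed.

Lemma pyM_mk r (Y : 'M[R]_(r,p)) (X : 'M[R]_(r, a+d)) : pyM (mkM Y X) = Y.
Proof. by rewrite /pyM /mkM !row_mxKl. Qed.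

Lemma pxM_mk r (Y : 'M[R]_(r,p)) (X : 'M[R]_(r, a+d)) : pxM (mkM Y X) = X.
Proof. by rewrite /pxM /mkM row_mxKl !row_mxKr hsubmxK. Qed.

Lemma mk_pyx r (V : 'M[R]_(r, (p+a)+d)) : mkM (pyM V) (pxM V) = V.
Proof. by rewrite /pyM /pxM /mkM row_mxKl row_mxKr !hsubmxK. Qed.

Lemma pyM_mul r s (A : 'M[R]_(s, r)) (V : 'M[R]_(r, (p+a)+d)) :
  pyM (A *m V) = A *m pyM V.
Proof. by rewrite /pyM !mulmx_lsub. Qed.

Lemma pxM_mul r s (A : 'M[R]_(s, r)) (V : 'M[R]_(r, (p+a)+d)) :
  pxM (A *m V) = A *m pxM V.
Proof. by rewrite /pxM mul_mx_row !mulmx_rsub mulmx_lsub. Qed.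

Lemma pyM_B r (V W : 'M[R]_(r, (p+a)+d)) : pyM (V - W) = pyM V - pyM W.
Proof. by rewrite -[V]mulmx1 -[W]mulmx1 -mulmxBl !pyM_mul mulmxBl. Qed.

Lemma pxM_B r (V W : 'M[R]_(r, (p+a)+d)) : pxM (V - W) = pxM V - pxM W.
Proof. by rewrite -[V]mulmx1 -[W]mulmx1 -mulmxBl !pxM_mul mulmxBl. Qed.

Lemma lsub_col m1 m2 n1 n2 (A : 'M[R]_(m1, n1 + n2)) (B : 'M[R]_(m2, n1 + n2)) :
  lsubmx (col_mx A B) = col_mx (lsubmx A) (lsubmx B).
Proof. by rewrite -[col_mx A B]mulmx1 -mulmx_lsub mul_col_mx !mulmx_lsub !mulmx1. Qed.

Lemma rsub_col m1 m2 n1 n2 (A : 'M[R]_(m1, n1 + n2)) (B : 'M[R]_(m2, n1 + n2)) :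
  rsubmx (col_mx A B) = col_mx (rsubmx A) (rsubmx B).
Proof. by rewrite -[col_mx A B]mulmx1 -mulmx_rsub mul_col_mx !mulmx_rsub !mulmx1. Qed.

Lemma det_comb (G : 'M[R]_(p, a+d)) (P : 'M[R]_(a, a+d)) (U : 'M[R]_(d, a+d)) :
  \det (col_mx (mkM (col_mx 1%:M 0) (col_mx G P)) (mkM 0 U)) = \det (col_mx P U).
Proof.
have E := block_mxA (A11 := (1%:M : 'M[R]_p)) (A12 := lsubmx G) (A13 := rsubmx G)
   (A21 := 0) (A22 := lsubmx P) (A23 := rsubmx P)
   (A31 := 0) (A32 := lsubmx U) (A33 := rsubmx U).
move: E; rewrite /= (hsubmxK G) col_mx0 [block_mx (lsubmx P) _ _ _]block_mxEv.
rewrite (hsubmxK P) (hsubmxK U) => /castmx_sym E.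
rewrite [X in \det (col_mx X _)]/mkM /mkM !lsub_col !rsub_col.
have -> : col_mx (row_mx (row_mx (col_mx 1%:M 0) (col_mx (lsubmx G) (lsubmx P)))
        (col_mx (rsubmx G) (rsubmx P))) (row_mx (row_mx 0 (lsubmx U)) (rsubmx U)) =
    block_mx (block_mx 1%:M (lsubmx G) 0 (lsubmx P)) (col_mx (rsubmx G) (rsubmx P))
      (row_mx 0 (lsubmx U)) (rsubmx U).
  by rewrite block_mxEv block_mxEh.
by rewrite E det_castmx det_ublock det1 mul1r.
Qed.
End Layout.

Section Lin.
Variables (N : lmodType R) (n : nat) (f : 'rV[R]_n -> N).
Hypothesis Hf : linear f.
Lemma linB u v : f (u - v) = f u - f v.
Proof. by have := Hf (-1) v u; rewrite !scaleN1r => H; rewrite addrC H addrC. Qed.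
Lemma lin0 : f 0 = 0.
Proof. by have H := linB 0 0; rewrite subr0 subrr in H. Qed.
Lemma linN u : f (- u) = - f u.
Proof. by have := linB 0 u; rewrite sub0r lin0 sub0r. Qed.
Lemma linD u v : f (u + v) = f u + f v.
Proof. by have := Hf 1 u v; rewrite !scale1r. Qed.
Lemma linZ c u : f (c *: u) = c *: f u.
Proof. by have := Hf c u 0; rewrite addr0 lin0 addr0. Qed.
Lemma lin_sum m (G : 'I_m -> 'rV[R]_n) : f (\sum_i G i) = \sum_i f (G i).
Proof. by elim/big_rec2 : _ => [|i x y _ <-]; [exact: lin0 | exact: linD]. Qed.
End Lin.

Lemma comb (N : lmodType R) p a d (P : 'M[R]_(a, a+d)) (pi : 'rV[R]_(a+d) -> N)
  (pi2 : 'rV[R]_p -> N) (F : 'M[R]_(p, a+d)) :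
  injective_presentation P pi ->
  (forall y z, pi2 (y - z) = pi2 y - pi2 z) ->
  (forall y, pi (y *m F) = pi2 y) ->
  let Q := mkM (col_mx 1%:M 0) (col_mx (-F) P) in
  let Phi := fun v : 'rV[R]_((p + a) + d) => pi2 (pyM v) + pi (pxM v) in
  [/\ (forall v, Phi v = 0 <-> exists w, v = w *m Q),
      (forall v w : 'rV_(p + a), v *m Q = w *m Q -> v = w) &
      (forall v w, Phi (v - w) = Phi v - Phi w)].
Proof.
case=> lin inj surj ker pi2B piF Q Phi.
have QE (w : 'rV_(p+a)) : w *m Q =
    mkM (lsubmx w) (- (lsubmx w *m F) + rsubmx w *m P).
  by rewrite /Q mkM_mul -{1 2}[w]hsubmxK !mul_row_col mulmx1 mulmx0 addr0 mulmxN.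
split.
- move=> v; split.
    rewrite /Phi => H.
    have /ker [w2 Hw2] : pi (pxM v + pyM v *m F) = 0.
      by rewrite (linD lin) piF addrC.
    exists (row_mx (pyM v) w2); rewrite QE row_mxKl row_mxKr -Hw2.
    by rewrite addrCA addNr addr0 mk_pyx.
  case=> w ->; rewrite /Phi QE pyM_mk pxM_mk (linD lin) (linN lin) piF.
  have -> : pi (rsubmx w *m P) = 0 by apply/ker; exists (rsubmx w).
  by rewrite addr0 subrr.
- move=> v w; rewrite !QE => H.
  have Hl : lsubmx v = lsubmx w by have := congr1 (@pyM p a d 1) H; rewrite !pyM_mk.
  have := congr1 (@pxM p a d 1) H; rewrite !pxM_mk Hl => /addrI /inj Hr.
  by rewrite -[v]hsubmxK -[w]hsubmxK Hl Hr.
- by move=> v w; rewrite /Phi pyM_B pxM_B pi2B (linB lin) addrACA opprD.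
Qed.

Lemma lift_mx (N : lmodType R) m n (pi : 'rV[R]_m -> N) (pi' : 'rV[R]_n -> N) :
  linear pi -> linear pi' -> (forall x, exists v, pi v = x) ->
  exists F : 'M[R]_(n, m), forall y, pi (y *m F) = pi' y.
Proof.
move=> lin lin' surj.
have [f Hf] := fin_all_exists (fun i : 'I_n => surj (pi' (delta_mx 0 i))).
exists (\matrix_i f i) => y.
rewrite mulmx_sum_row (lin_sum lin); rewrite [in RHS](row_sum_delta y) (lin_sum lin').
by apply: eq_bigr => i _; rewrite rowK (linZ lin) (linZ lin') Hf.
Qed.
End Mx.

Section Order.
Variable G : zmodType.
Variable lt : G -> G -> Prop.
Hypothesis lt_trans : forall x y z, lt x y -> lt y z -> lt x z.
Hypothesis lt_irr : forall x, ~ lt x x.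
Hypothesis lt_tot : forall x y, x <> y -> lt x y \/ lt y x.
Hypothesis lt_add : forall x y z, lt x y -> lt (x + z) (y + z).

Definition le x y := x = y \/ lt x y.

Lemma le_lt_trans x y z : le x y -> lt y z -> lt x z.
Proof. by case=> [->//|]; apply: lt_trans. Qed.
Lemma lt_le_trans x y z : lt x y -> le y z -> lt x z.
Proof. by move=> H [<-//|]; apply: lt_trans. Qed.

Lemma exists_max (S : seq G) : S != [::] ->
  exists2 m, m \in S & forall g, g \in S -> le g m.
Proof.
elim: S => // x [|y S] IH _.
  by exists x => [|g]; rewrite ?mem_seq1 // => /eqP ->; left.
have [m mS Hm] := IH isT.
have [xm|xm] := eqVneq x m.
  by exists m => [|g]; rewrite inE ?mS ?orbT // => /orP[/eqP->|/Hm]; [left|].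
case: (lt_tot (elimN eqP xm)) => H.
  by exists m => [|g]; rewrite inE ?mS ?orbT // => /orP[/eqP->|/Hm]; [right|].
exists x => [|g]; first by rewrite inE eqxx.
rewrite inE => /orP[/eqP->|/Hm Hg]; first by left.
right; exact: le_lt_trans Hg H.
Qed.

Lemma unique_sum gm hm g h : le g gm -> le h hm -> g + h = gm + hm -> g = gm /\ h = hm.
Proof.
move=> [->|Hg] [->|Hh] E //.
- by move/addrI: E.
- by move/addIr: E.
- have H1 : lt (g + h) (gm + h) by apply: lt_add.
  have H2 : lt (gm + h) (gm + hm) by rewrite addrC [gm + hm]addrC; apply: lt_add.
  by have := lt_trans H1 H2; rewrite {1}E => /lt_irr.
Qed.
End Order.

Definition lexlt n (x y : 'rV[int]_n) : Prop :=
  exists i : 'I_n, (forall j : 'I_n, (j < i)%N -> x 0 j = y 0 j) /\ x 0 i < y 0 i.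

Section Lex.
Variable n : nat.
Implicit Types x y z : 'rV[int]_n.

Lemma lex_trans x y z : lexlt x y -> lexlt y z -> lexlt x z.
Proof.
move=> [i [Hi1 Hi2]] [k [Hk1 Hk2]].
case: (ltngtP i k) => ik.
- exists i; split; last by rewrite (Hk1 i ik) in Hi2.
  by move=> j ji; rewrite Hi1 // Hk1 //; apply: ltn_trans ik.
- exists k; split; last by rewrite (Hi1 k ik).
  by move=> j jk; rewrite Hi1 ?Hk1 //; apply: ltn_trans ik.
- have ik' : i = k by apply: val_inj.
  subst k; exists i; split; first by move=> j ji; rewrite Hi1 ?Hk1.
  exact: lt_trans Hi2 Hk2.
Qed.

Lemma lex_irr x : ~ lexlt x x.
Proof. by case=> i [_]; rewrite ltxx. Qed.

Lemma lex_add x y z : lexlt x y -> lexlt (x + z) (y + z).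
Proof.
case=> i [H1 H2]; exists i; split; first by move=> j ji; rewrite !mxE H1.
by rewrite !mxE ltrD2r.
Qed.

Lemma lex_tot x y : x <> y -> lexlt x y \/ lexlt y x.
Proof.
move=> xy.
have [j0 Hj0] : exists j, x 0 j != y 0 j.
  apply/existsP; apply: contraT; rewrite negb_exists => /forallP H.
  by exfalso; apply: xy; apply/rowP => j; apply/eqP; have := H j; rewrite negbK.
case: (@arg_minnP _ j0 (fun j => x 0 j != y 0 j) (fun j : 'I_n => nat_of_ord j) Hj0) => i Pi mini.
have Hlt : forall j : 'I_n, (j < i)%N -> x 0 j = y 0 j.
  move=> j ji; apply/eqP; apply: contraT => Hj.
  by have := mini j Hj; rewrite leqNgt ji.
case/orP: (lt_total Pi) => H; [left|right]; exists i; split => //.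
by move=> j ji; rewrite Hlt.
Qed.
End Lex.

Lemma sum_pick (T : eqType) (V : zmodType) (r : seq T) (i : T) (F : T -> V) :
  uniq r -> i \in r -> \sum_(j <- r) (if i == j then F j else 0) = F i.
Proof.
move=> ur ir; rewrite (bigD1_seq i) //= eqxx big1 ?addr0 // => j.
by rewrite eq_sym => /negbTE ->.
Qed.

Section Units.
Variables (n : nat) (R : comNzRingType) (e : 'rV[int]_n -> R).
Hypothesis Hg : is_group_ring e.
Local Notation G := 'rV[int]_n.

Lemma normal_form r : exists S : seq G, exists f : G -> int,
  [/\ uniq S, forall g, g \in S -> f g != 0 & r = \sum_(g <- S) (f g)%:~R * e g].
Proof.
case: Hg => e0 eM span indep.
have [s ->] := span r.
pose S0 := undup [seq p.1 | p <- s].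
pose f0 g := \sum_(p <- s) (if p.1 == g then p.2 else 0).
exists [seq g <- S0 | f0 g != 0], f0; split.
- by rewrite filter_uniq // undup_uniq.
- by move=> g; rewrite mem_filter => /andP[].
symmetry; rewrite big_filter big_mkcond /=.
have -> : \sum_(i <- S0) (if f0 i != 0 then (f0 i)%:~R * e i else 0) =
          \sum_(i <- S0) (f0 i)%:~R * e i.
  by apply: eq_bigr => i _; case: eqP => // ->; rewrite mulr0z mul0r.
have -> : \sum_(i <- S0) (f0 i)%:~R * e i =
   \sum_(i <- S0) \sum_(p <- s) (if p.1 == i then p.2%:~R * e p.1 else 0).
  apply: eq_bigr => i _; rewrite /f0 mulrz_sumr mulr_suml.
  by apply: eq_bigr => p _; case: eqP => [->|_]; rewrite ?mulr0z ?mul0r.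
rewrite exchange_big /=; apply: eq_big_seq => p ps.
rewrite sum_pick ?undup_uniq //.
by rewrite /S0 mem_undup map_f.
Qed.

Lemma units_trivial_aux (c c' : R) : c * c' = 1 ->
  exists (eps : bool) (g : G), c = (-1) ^+ eps * e g.
Proof.
have Hg0 := Hg; case: Hg0 => e0 eM span indep.
move=> cc'.
have [S [f [uS nzS cE]]] := normal_form c.
have [S' [f' [uS' nzS' cE']]] := normal_form c'.
have SN : S != [::].
  apply/eqP => S0; move: cc'; rewrite cE S0 big_nil mul0r => /eqP.
  by rewrite eq_sym oner_eq0.
have SN' : S' != [::].
  apply/eqP => S0; move: cc'; rewrite cE' S0 big_nil mulr0 => /eqP.
  by rewrite eq_sym oner_eq0.
pose ltm := fun x y : G => lexlt y x.
have ltm_trans : forall x y z, ltm x y -> ltm y z -> ltm x z.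
  by move=> x y z H1 H2; apply: lex_trans H2 H1.
have ltm_tot : forall x y : G, x <> y -> ltm x y \/ ltm y x.
  by move=> x y /lex_tot []; [right|left].
have ltm_irr : forall x : G, ~ ltm x x by move=> x; apply: lex_irr.
have ltm_add : forall x y z : G, ltm x y -> ltm (x + z) (y + z).
  by move=> x y z; apply: lex_add.
have [g1 g1S Hg1] := exists_max (@lex_trans n) (@lex_tot n) SN.
have [h1 h1S Hh1] := exists_max (@lex_trans n) (@lex_tot n) SN'.
have [g0 g0S Hg0] := exists_max ltm_trans ltm_tot SN.
have [h0 h0S Hh0] := exists_max ltm_trans ltm_tot SN'.
have prodE : c * c' = \sum_(g <- S) \sum_(h <- S') (f g * f' h)%:~R * e (g + h).
  rewrite cE cE' big_distrl; apply: eq_bigr => g _; rewrite big_distrr.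
  by apply: eq_bigr => h _; rewrite intrM eM mulrACA.
pose T := undup (0 :: [seq g + h | g <- S, h <- S']).
have uT : uniq T by apply: undup_uniq.
pose k t := \sum_(g <- S) \sum_(h <- S') (if g + h == t then f g * f' h else 0)
            - (t == 0)%:Z.
have sumk : \sum_(t <- T) (k t)%:~R * e t = 0.
  have -> : \sum_(t <- T) (k t)%:~R * e t =
    \sum_(t <- T) \sum_(g <- S) \sum_(h <- S')
         (if g + h == t then (f g * f' h)%:~R * e t else 0)
    - \sum_(t <- T) (if 0 == t then e t else 0).
    rewrite -sumrB; apply: eq_bigr => t _.
    rewrite /k intrB mulrBl mulrz_sumr mulr_suml; congr (_ - _).
      apply: eq_bigr => g _; rewrite mulrz_sumr mulr_suml.
      by apply: eq_bigr => h _; case: eqP; rewrite ?mulr0z ?mul0r.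
    by rewrite eq_sym; case: eqP; rewrite ?mulr0z ?mul0r ?mul1r.
  rewrite sum_pick // ?mem_undup ?mem_head // e0.
  rewrite exchange_big /=.
  have -> : \sum_(j <- S) \sum_(i <- T) \sum_(h <- S')
      (if j + h == i then (f j * f' h)%:~R * e i else 0) =
      \sum_(j <- S) \sum_(h <- S') (f j * f' h)%:~R * e (j + h).
    apply: eq_big_seq => g gS; rewrite exchange_big /=; apply: eq_big_seq => h hS.
    rewrite sum_pick // mem_undup inE; apply/orP; right.
    apply/flattenP; eexists; first by apply/mapP; exists g.
    by apply/mapP; exists h.
  by rewrite -prodE cc' subrr.
have k0 : forall t, t \in T -> k t = 0.
  by move=> t; apply: (indep T k uT sumk).
have extr : forall gm hm, gm \in S -> hm \in S' ->
    (forall g h, g \in S -> h \in S' -> g + h = gm + hm -> g = gm /\ h = hm) ->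
    f gm * f' hm = (gm + hm == 0)%:Z.
  move=> gm hm gmS hmS U.
  have := k0 (gm + hm); rewrite /k mem_undup inE allpairs_f ?orbT // => /(_ isT).
  rewrite (bigD1_seq gm) //= (bigD1_seq hm) //= eqxx.
  rewrite big1 ?addr0; last by move=> h /negbTE hh; case: eqP => // /addrI he; rewrite he eqxx in hh.
  rewrite big1_seq ?addr0; last first.
    move=> g /andP[gg gS]; apply: big1_seq => h /andP[_ hS].
    case: eqP => // /(U _ _ gS hS) [E _]; by rewrite E eqxx in gg.
  by move/eqP; rewrite subr_eq0 => /eqP.
have U1 : forall g h, g \in S -> h \in S' -> g + h = g1 + h1 -> g = g1 /\ h = h1.
  move=> g h gS hS; apply: (unique_sum (@lex_trans n) (@lex_irr n) (@lex_add n)).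
    exact: Hg1.
  exact: Hh1.
have U0 : forall g h, g \in S -> h \in S' -> g + h = g0 + h0 -> g = g0 /\ h = h0.
  move=> g h gS hS; apply: (unique_sum ltm_trans ltm_irr ltm_add).
    exact: Hg0.
  exact: Hh0.
have E1 := extr _ _ g1S h1S U1.
have E0 := extr _ _ g0S h0S U0.
have nz1 : f g1 * f' h1 != 0 by rewrite mulf_neq0 ?nzS ?nzS'.
have nz0 : f g0 * f' h0 != 0 by rewrite mulf_neq0 ?nzS ?nzS'.
have s1 : g1 + h1 = 0 by apply/eqP; move: nz1; rewrite E1; case: (g1 + h1 == 0).
have s0 : g0 + h0 = 0 by apply/eqP; move: nz0; rewrite E0; case: (g0 + h0 == 0).
have [eg _] : g0 = g1 /\ h0 = h1.
  apply: U1 => //; by rewrite s0 s1.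
have allS : forall g, g \in S -> g = g0.
  move=> g gS; case: (Hg0 g gS) => // H0; case: (Hg1 g gS) => H1.
    by rewrite H1 eg.
  by exfalso; apply: (@lex_irr n g); apply: lex_trans H1 _; rewrite -eg.
have cE0 : c = (f g0)%:~R * e g0.
  rewrite cE (bigD1_seq g0) //= big1_seq ?addr0 //.
  by move=> g /andP[gg gS]; rewrite (allS g gS) eqxx in gg.
have u1 : f g0 * f' h0 = 1 by rewrite E0 s0 eqxx.
have a1 : `|f g0|%N = 1%N.
  by apply/eqP; have := congr1 absz u1; rewrite abszM => /eqP; rewrite muln_eq1 => /andP[].
exists (f g0 < 0), g0; rewrite cE0.
have H := abszEsign (f g0); rewrite a1 in H.
case: (f g0 < 0) H => /= H.
  have -> : f g0 = -1 by rewrite expr1 mulN1r in H; rewrite -[f g0]opprK -H.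
  by rewrite expr1 mulrN1z.
have -> : f g0 = 1 by rewrite expr0 mul1r in H; rewrite -H.
by rewrite expr0.
Qed.
End Units.

Lemma units_trivial (n : nat) (R : comNzRingType) (e : 'rV[int]_n -> R) :
  is_group_ring e -> forall c c' : R, c * c' = 1 ->
  exists (eps : bool) (g : 'rV[int]_n), c = (-1) ^+ eps * e g.
Proof. by move=> Hg c c'; apply: units_trivial_aux. Qed.

Theorem proposition10p3 (n : nat) (R : comNzRingType) (e : 'rV[int]_n -> R)
  (N : lmodType R) (a a' d : nat)
  (P : 'M[R]_(a, a + d)) (pi : 'rV[R]_(a + d) -> N)
  (P' : 'M[R]_(a', a' + d)) (pi' : 'rV[R]_(a' + d) -> N) :
  is_group_ring e ->
  injective_presentation P pi ->
  injective_presentation P' pi' ->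
  (* A_P does not depend on the lifts *)
  (forall (u : 'I_d -> N) (ubar vbar : 'I_d -> 'rV[R]_(a + d)),
      (forall j, pi (ubar j) = u j) -> (forall j, pi (vbar j) = u j) ->
      alex_det P ubar = alex_det P vbar) /\
  (* a single element eps*g of +-G relates A_P' and A_P *)
  (exists (eps : bool) (g : 'rV[int]_n),
      forall (u : 'I_d -> N) (ubar : 'I_d -> 'rV[R]_(a + d))
             (ubar' : 'I_d -> 'rV[R]_(a' + d)),
        (forall j, pi (ubar j) = u j) -> (forall j, pi' (ubar' j) = u j) ->
        alex_det P' ubar' = (-1) ^+ eps * e g * alex_det P ubar).
Proof.
move=> Hg HP HP'.
have HP0 := HP; have HP'0 := HP'.
case: HP0 => lin inj surj ker; case: HP'0 => lin' inj' surj' ker'.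
split.
  move=> u ubar vbar Hu Hv; rewrite /alex_det.
  have [X HX] : exists X, \matrix_j ubar j - \matrix_j vbar j = X *m P.
    apply: rows_choice => j; apply/ker.
    by rewrite rowE mulmxBr -!rowE !rowK (linB lin) Hu Hv subrr.
  have -> : \matrix_j ubar j = X *m P + \matrix_j vbar j by rewrite -HX subrK.
  exact: det_lift_rows.
have [Fm' HFm'] := lift_mx lin lin' surj.
have [Fm HFm] := lift_mx lin' lin surj'.
have [ker1 inj1 B1] := comb HP (linB lin') HFm'.
have [ker2 inj2 B2] := comb HP' (linB lin) HFm.
set Q1 := mkM _ _ in ker1 inj1.
set Q2 := mkM _ _ in ker2 inj2.
pose Phi1 := fun v : 'rV[R]_((a'+d)+a+d) => pi' (pyM v) + pi (pxM v).
pose Phi2 := fun v : 'rV[R]_((a+d)+a'+d) => pi (pyM v) + pi' (pxM v).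
have ek : ((a' + d) + a = (a + d) + a')%N by rewrite addnAC [in RHS]addnAC (addnC a').
pose C := @mkM R (a + d) a' d _ (@pxM R (a'+d) a d _ 1%:M) (@pyM R (a'+d) a d _ 1%:M).
pose C' := @mkM R (a' + d) a d _ (@pxM R (a+d) a' d _ 1%:M) (@pyM R (a+d) a' d _ 1%:M).
have CC' : C *m C' = 1%:M.
  rewrite /C' mkM_mul -pxM_mul -pyM_mul !mulmx1 pxM_mk pyM_mk.
  by rewrite -{3}[1%:M]mk_pyx.
have C'C : C' *m C = 1%:M.
  rewrite /C mkM_mul -pxM_mul -pyM_mul !mulmx1 pxM_mk pyM_mk.
  by rewrite -{3}[1%:M]mk_pyx.
have PhiC v : Phi2 (v *m C) = Phi1 v.
  rewrite /Phi1 /Phi2 /C mkM_mul pyM_mk pxM_mk -pxM_mul -pyM_mul !mulmx1.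
  by rewrite addrC.
have [c [c' [cc' Hc]]] := gen (Phi := Phi1) (Phi' := Phi2) ek CC' C'C PhiC B2 ker1 inj1 ker2.
have [eps [g Hcg]] := units_trivial Hg cc'.
exists eps, g => u ubar ubar' Hu Hu'.
rewrite /alex_det -Hcg.
rewrite -(det_comb (- Fm) P' (\matrix_j ubar' j)) -(det_comb (- Fm') P (\matrix_j ubar j)).
apply: Hc => j.
rewrite /Phi1 /Phi2 !rowE !mkM_mul !mulmx0 !pyM_mk !pxM_mk -!rowE !rowK.
by rewrite (lin0 lin) (lin0 lin') !add0r Hu Hu'.
Qed.
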